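(* Let $(\star)$ be a linear system over $\mathbb{F}_q$ ($q$ a prime power) with coefficient matrix $A\in\mathbb{F}_q^{m\times k}$, let $t$ be a positive integer, let $\{(x^{(i)}_1,\dots,x^{(i)}_k)\}_{i=1}^L$ be a list of pairwise disjoint solutions of $(\star)$ in $(\mathbb{F}_q^n)^k$, and let $j_1\ne j_2$ be indices in the same column equivalence class. If $L\ge4t(\Gamma_q)^n$, then there exist $i\in[L]$ and $t$ distinct pairs $(i'_s,i''_s)\in([L]\setminus\{i\})^2$, $s\in[t]$, such that for every $s\in[t]$ the tuple $(y^{(s)}_1,\dots,y^{(s)}_k)$ given by $y^{(s)}_j=x^{(i)}_j$ for $j\ne j_1,j_2$, $y^{(s)}_{j_1}=x^{(i'_s)}_{j_1}$, $y^{(s)}_{j_2}=x^{(i''_s)}_{j_2}$ is a solution of $(\star)$.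
   Context: Solutions are tuples in $(\mathbb{F}_q^n)^k$ with $\sum_ja_{ij}x_j=0$ for all $i$. Two solutions $(x_j)$, $(y_j)$ are disjoint if $\{x_1,\dots,x_k\}\cap\{y_1,\dots,y_k\}=\varnothing$. Indices $j,j'$ are in the same column equivalence class if columns $j,j'$ of $A$ are nonzero scalar multiples of one another. $\Gamma_q:=q\,J(q)$ where $J(t)=\frac1t\min_{0<x<1}\frac{1+x+\cdots+x^{t-1}}{x^{(t-1)/3}}$. *)

(* Defs.v *)
From HB Require Import structures.
From mathcomp Require Import all_boot all_order all_algebra.
From mathcomp Require Import all_classical all_reals all_analysis.
Set Implicit Arguments. Unset Strict Implicit. Unset Printing Implicit Defensive.
Import Order.TTheory GRing.Theory Num.Theory.
Local Open Scope ring_scope.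
Local Open Scope classical_set_scope.

(* x : 'I_k -> 'rV[F]_n is a tuple (x_1,...,x_k) in (F^n)^k; it solves the
   system with coefficient matrix A if sum_j a_ij x_j = 0 for every row i. *)
Definition is_solution (F : fieldType) (m k n : nat) (A : 'M[F]_(m, k))
  (x : 'I_k -> 'rV[F]_n) : Prop :=
  forall r : 'I_m, \sum_(j < k) A r j *: x j = 0.

Definition disjoint_sol (F : fieldType) (k n : nat) (x y : 'I_k -> 'rV[F]_n) : Prop :=
  forall j j' : 'I_k, x j != y j'.

Definition same_col_class (F : fieldType) (m k : nat) (A : 'M[F]_(m, k))
  (j j' : 'I_k) : Prop :=
  exists c : F, c != 0 /\ col j A = c *: col j' A.

(* J(t) = (1/t) min_{0<x<1} (1 + x + ... + x^(t-1)) / x^((t-1)/3);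
   the minimum is attained, so we take the infimum. *)
Definition Jfun (R : realType) (t : nat) : R :=
  t%:R^-1 * inf [set (\sum_(l < t) x ^+ l) / powR x ((t.-1)%:R / 3) | x in `]0, 1[].

Definition Gamma (R : realType) (q : nat) : R := q%:R * Jfun R q.

(* Main.v *)
Require Import Defs.
From HB Require Import structures.
From mathcomp Require Import all_boot all_order all_algebra all_field.
From mathcomp Require Import ring zify.
Import Order.TTheory GRing.Theory Num.Theory.
Local Open Scope ring_scope.
Set Implicit Arguments. Unset Strict Implicit. Unset Printing Implicit Defensive.

Lemma card_filter_sum (V : finType) (W : {set V}) (p : pred V) :
  #|[set a in W | p a]| = (\sum_(a in W) (p a : nat))%N.
Proof.
rewrite -sum1_card (eq_bigl (fun a => (a \in W) && p a)); last by move=> a; rewrite inE.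
by rewrite big_mkcondr /=; apply: eq_bigr => a _; case: (p a).
Qed.

Lemma indep_set_sub (V : finType) (N : V -> {set V}) (d : nat) :
  (forall c, #|N c| <= d)%N -> (forall c, c \notin N c) ->
  forall W : {set V}, exists I : {set V}, [/\ I \subset W,
    (#|W| <= (2*d+1) * #|I|)%N &
    forall a c, a \in I -> c \in I -> a \notin N c].
Proof.
move=> Nd Nirr W.
move: {2}#|W| (leqnn #|W|) => n; elim: n W => [|n IH] W.
  rewrite leqn0 cards_eq0 => /eqP ->; exists set0; split => //.
    by rewrite cards0.
  by move=> a c; rewrite inE.
move=> Wn.
case: (set_0Vmem W) => [->|[v0 v0W]].
  by exists set0; split => //; rewrite ?cards0 // => a c; rewrite inE.
pose deg v := (#|N v :&: W| + #|[set a in W | v \in N a]|)%N.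
have sumdeg : (\sum_(v in W) deg v <= 2 * d * #|W|)%N.
  rewrite big_split /=.
  have -> : (\sum_(v in W) #|[set a in W | v \in N a]| =
             \sum_(a in W) #|N a :&: W|)%N.
    under eq_bigr => v _ do rewrite card_filter_sum.
    rewrite exchange_big /=; apply: eq_bigr => a _.
    rewrite setIC card_filter_sum.
    by apply: eq_bigr.
  have : (\sum_(v in W) #|N v :&: W| <= d * #|W|)%N.
    rewrite mulnC -sum_nat_const; apply: leq_sum => v _.
    exact: leq_trans (subset_leq_card (subsetIl _ _)) (Nd v).
  lia.
have [v vW dv] : exists2 v, v \in W & (deg v <= 2 * d)%N.
  apply/exists_inP; apply: contraTT sumdeg => /exists_inPn H.
  rewrite -ltnNge; apply: leq_trans (_ : (\sum_(v in W) (2 * d).+1 <= _))%N.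
    rewrite sum_nat_const mulnC ltn_mul2l /=.
    by apply/andP; split; [apply/card_gt0P; exists v0 | ].
  apply: leq_sum => v vW; have := H v vW; by rewrite -ltnNge.
pose R := v |: ((N v :&: W) :|: [set a in W | v \in N a]).
have cR : (#|R| <= (2 * d).+1)%N.
  have h1 := cardsU1 v ((N v :&: W) :|: [set a in W | v \in N a]).
  have h2 := cardsUI (N v :&: W) [set a in W | v \in N a].
  move: dv; rewrite /deg /R h1; case: (v \notin _) => /=; lia.
have vR : v \in R by rewrite /R setU11.
have cW := cardsID R W.
have cWR : (#|W :&: R| <= #|R|)%N by apply: subset_leq_card; apply: subsetIr.
have vWR : v \in W :&: R by rewrite inE vW vR.
have cWR0 : (0 < #|W :&: R|)%N by apply/card_gt0P; exists v.
have [I' [sI' cI' indI']] := IH (W :\: R) ltac:(lia).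
have vI' : v \notin I'.
  by apply: contraL vR => /(subsetP sI'); rewrite inE => /andP [].
exists (v |: I'); split.
- by rewrite subUset sub1set vW (subset_trans sI') // subsetDl.
- rewrite cardsU1 vI' /=; lia.
- have key x : x \in I' -> [/\ x \in W, x \notin N v & v \notin N x].
    move/(subsetP sI'); rewrite !inE => /andP [xR xW]; split => //.
      by apply: contra xR => xN; rewrite xN xW orbT.
    by apply: contra xR => vN; rewrite xW vN !orbT.
  move=> a c; rewrite !inE => /orP [/eqP ->|aI] /orP [/eqP ->|cI].
  + exact: Nirr.
  + by case: (key c cI).
  + by case: (key a aI).
  + exact: indI'.
Qed.

Lemma rank_sum_le (F : fieldType) (I : finType) (P : pred I) m n
  (M : I -> 'M[F]_(m, n)) :
  (forall i, P i -> leq (\rank (M i)) 1) ->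
  (\rank (\sum_(i | P i) M i)%R <= #|P|)%N.
Proof.
move=> H; rewrite -sum1_card.
elim/big_ind2: _ => //; first by rewrite mxrank0.
move=> A a B b Ha Hb; apply: leq_trans (mxrank_add _ _) _; exact: leq_add.
Qed.

Lemma rank_outer (F : fieldType) m n (c : 'cV[F]_m) (r : 'rV[F]_n) :
  (\rank (c *m r) <= 1)%N.
Proof. exact: leq_trans (mxrankM_maxl _ _) (rank_leq_col _). Qed.

Lemma support_lemma (F : fieldType) d N (B : 'M[F]_(d, N)) :
  row_free B -> exists (z : 'rV_d) (f : 'I_d -> 'I_N),
    injective f /\ forall i, (z *m B) 0 (f i) = 1.
Proof.
move=> fB.
have fBT : row_full B^T by rewrite /row_full mxrank_tr; exact: fB.
pose f := fullrankfun fBT.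
have Cu : (colsub f B) \in unitmx.
  rewrite -unitmx_tr -row_full_unit /row_full.
  have -> : (colsub f B)^T = rowsub f B^T by apply/matrixP=> i j; rewrite !mxE.
  by rewrite mxrank_fullrowsub.
pose z : 'rV[F]_d := const_mx 1 *m invmx (colsub f B).
exists z, f; split; first exact: fullrankfun_inj.
move=> i.
have : colsub f (z *m B) = const_mx 1.
  by rewrite -mulmx_colsub mulmxKV.
by move/matrixP => /(_ 0 i); rewrite !mxE.
Qed.

Lemma mul_delta_entry (F : fieldType) n (X : 'M[F]_1) (j k : 'I_n) :
  (X *m delta_mx 0 j) 0 k = X 0 0 * (j == k)%:R.
Proof. by rewrite mxE big_ord1 mxE (eq_sym k) ord1 eqxx. Qed.

Lemma slice_rank (F : fieldType) (Ix I : finType) (S : {set Ix}) (P : pred I)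
  (T : Ix -> Ix -> Ix -> F) (f1 f2 f3 : I -> Ix -> F)
  (g1 g2 g3 : I -> Ix -> Ix -> F) :
  (forall a, a \in S -> T a a a != 0) ->
  (forall a b c, a \in S -> b \in S -> c \in S -> T a b c != 0 -> a = c /\ b = c) ->
  (forall a b c, a \in S -> b \in S -> c \in S -> T a b c =
     \sum_(i | P i) f1 i a * g1 i b c + \sum_(i | P i) f2 i b * g2 i a c
     + \sum_(i | P i) f3 i c * g3 i a b) ->
  (#|S| <= 3 * #|P|)%N.
Proof.
move=> Tdiag Toff Tdec.
set N := #|S|.
pose e (i : 'I_N) : Ix := enum_val i.
have eS i : e i \in S.
  exact: enum_valP.
have einj : injective e by exact: enum_val_inj.
pose col3 i : 'cV[F]_N := \col_c f3 i (e c).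
pose Phi := (\sum_(i | P i) col3 i *m delta_mx 0 (enum_rank i))%R : 'M[F]_(N, #|I|).
have rPhi : (\rank Phi <= #|P|)%N by apply: rank_sum_le => i _; apply: rank_outer.
pose K := kermx Phi.
have rK : (N - #|P| <= \rank K)%N by rewrite mxrank_ker leq_sub2l.
have [z [f [finj hf]]] := support_lemma (row_base_free K).
pose h := z *m row_base K.
have hPhi : h *m Phi = 0.
  rewrite /h; have /submxP [D ->] : (row_base K <= K)%MS by rewrite eq_row_base.
  have KP : K *m Phi = 0 := mulmx_ker Phi.
  by rewrite -(mulmxA z) -(mulmxA D) KP !mulmx0.
have h3 i : P i -> \sum_c f3 i (e c) * h 0 c = 0.
  move=> Pi; have := congr1 (fun M : 'M[F]_(1, #|I|) => M 0 (enum_rank i)) hPhi.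
  rewrite /= mulmx_sumr summxE (bigD1 i) //= big1 ?addr0.
    rewrite mulmxA mul_delta_entry eqxx mulr1 [in RHS]mxE mxE => H.
    rewrite -[RHS]H; apply: eq_bigr => c _; by rewrite [col3 _ _ _]mxE mulrC.
  move=> i' /andP [_ ni']; rewrite mulmxA mul_delta_entry.
  by rewrite (inj_eq enum_rank_inj) (negbTE ni') mulr0.
pose Mx : 'M[F]_N := \matrix_(a, b) \sum_c T (e a) (e b) (e c) * h 0 c.
pose X1 := (\sum_(i | P i) (\col_a f1 i (e a)) *m (\row_b \sum_c g1 i (e b) (e c) * h 0 c))%R : 'M[F]_N.
pose X2 := (\sum_(i | P i) (\col_a \sum_c g2 i (e a) (e c) * h 0 c) *m (\row_b f2 i (e b)))%R : 'M[F]_N.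
have MX : Mx = X1 + X2.
  apply/matrixP => a b; rewrite !mxE !summxE.
  under eq_bigr => c _ do rewrite Tdec // !mulrDl.
  rewrite !big_split /=.
  have -> : \sum_c (\sum_(i | P i) f3 i (e c) * g3 i (e a) (e b)) * h 0 c = 0.
    under eq_bigr => c _ do rewrite mulr_suml.
    rewrite exchange_big /= big1 // => i Pi.
    transitivity (g3 i (e a) (e b) * \sum_c f3 i (e c) * h 0 c);
      last by rewrite h3 // mulr0.
    by rewrite mulr_sumr; apply: eq_bigr => c _; rewrite mulrAC mulrC.
  rewrite addr0; congr (_ + _).
    under eq_bigr => c _ do rewrite mulr_suml.
    rewrite exchange_big /=; apply: eq_bigr => i Pi.
    rewrite !mxE big_ord1 !mxE mulr_sumr; apply: eq_bigr => c _.
    by rewrite mulrA.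
  under eq_bigr => c _ do rewrite mulr_suml.
  rewrite exchange_big /=; apply: eq_bigr => i Pi.
  rewrite !mxE big_ord1 !mxE mulr_suml; apply: eq_bigr => c _.
  by rewrite [RHS]mulrC mulrA.
have rMx : (\rank Mx <= #|P| + #|P|)%N.
  rewrite MX; apply: leq_trans (mxrank_add _ _) _; apply: leq_add;
  by apply: rank_sum_le => i _; apply: rank_outer.
have Msub : mxsub f f Mx = diag_mx (\row_i T (e (f i)) (e (f i)) (e (f i))).
  apply/matrixP => i j; rewrite !mxE (bigD1 (f i)) //= big1 ?addr0.
    rewrite hf mulr1; case: (eqVneq i j) => [->|nij]; first by rewrite mulr1n.
    rewrite mulr0n; apply/eqP; apply: contraNT nij => /(Toff _ _ _ (eS _) (eS _) (eS _)).
    by move=> [_ /einj /finj ->].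
  move=> c ncf; apply/eqP; rewrite mulf_eq0; apply/orP; left.
  apply: contraNT ncf => /(Toff _ _ _ (eS _) (eS _) (eS _)) [/einj -> _].
  by [].
have rsub : \rank (mxsub f f Mx) = \rank K.
  apply: mxrank_unit; rewrite Msub unitmxE det_diag unitfE.
  by apply/prodf_neq0 => i _; rewrite mxE Tdiag.
have rsubM : (\rank (mxsub f f Mx) <= \rank Mx)%N.
  rewrite -{1}[Mx]mul1mx mxsub_mul; apply: leq_trans (mxrankM_maxr _ _) _.
  rewrite -[Mx in colsub _ Mx]mulmx1 -mulmx_colsub; exact: mxrankM_maxl.
move: rK; rewrite -rsub => rK.
have := leq_trans rK (leq_trans rsubM rMx).
by rewrite leq_subLR !mulSn mul0n addn0.
Qed.

Definition mono (F : comNzRingType) (m : F * nat * nat * nat) (x y z : F) : F :=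
  m.1.1.1 * x ^+ m.1.1.2 * y ^+ m.1.2 * z ^+ m.2.

Definition mdeg (F : comNzRingType) (m : F * nat * nat * nat) : nat :=
  (m.1.1.2 + m.1.2 + m.2)%N.

Lemma poly_list (F : comNzRingType) (d : nat) : exists l : seq (F * nat * nat * nat),
  all (fun m => mdeg m <= d)%N l /\
  forall x y z : F, (x + y - z) ^+ d = \sum_(m <- l) mono m x y z.
Proof.
elim: d => [|d [l [Hl He]]].
  exists [:: (1 : F, 0%N, 0%N, 0%N)]; split => // x y z.
  by rewrite big_seq1 /mono /= !expr0 !mulr1.
exists ([seq (m.1.1.1, m.1.1.2.+1, m.1.2, m.2) | m <- l]
     ++ [seq (m.1.1.1, m.1.1.2, m.1.2.+1, m.2) | m <- l]
     ++ [seq (- m.1.1.1, m.1.1.2, m.1.2, m.2.+1) | m <- l]); split.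
  rewrite !all_cat !all_map; apply/and3P; split;
  by apply/allP => m /(allP Hl); rewrite /mdeg /=; lia.
move=> x y z; rewrite exprSr He !big_cat !big_map /=.
rewrite !mulrDr mulrN !mulr_suml -sumrN addrA.
congr (_ + _ + _); apply: eq_bigr => m _; rewrite /mono /= !exprS; ring.
Qed.

Lemma poly_list1 (F : comNzRingType) (d : nat) : exists l : seq (F * nat * nat * nat),
  all (fun m => mdeg m <= d)%N l /\
  forall x y z : F, 1 - (x + y - z) ^+ d = \sum_(m <- l) mono m x y z.
Proof.
have [l [Hl He]] := poly_list F d.
exists ((1 : F, 0%N, 0%N, 0%N) :: [seq (- m.1.1.1, m.1.1.2, m.1.2, m.2) | m <- l]); split.
  by rewrite /= all_map; apply/allP => m /(allP Hl).
move=> x y z; rewrite big_cons big_map He -sumrN /mono /= !expr0 !mulr1.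
congr (_ + _); apply: eq_bigr => m _; ring.
Qed.

Definition Qf (F : finFieldType) := #|F|.-1.

Definition Mpred (F : finFieldType) (D : finType) : pred {ffun D -> 'I_(Qf F).+1} :=
  fun al => (3 * \sum_r (al r : nat) <= Qf F * #|D|)%N.

Lemma QfS (F : finFieldType) : #|F| = (Qf F).+1.
Proof. by rewrite /Qf prednK // (ltn_trans _ (card_finNzRing_gt1 F)). Qed.

Lemma Qf_gt0 (F : finFieldType) : (0 < Qf F)%N.
Proof. by have := card_finNzRing_gt1 F; rewrite QfS. Qed.

Lemma fermat (F : finFieldType) (z : F) : 1 - z ^+ Qf F = (z == 0)%:R.
Proof.
case: eqP => [->|/eqP nz].
  by rewrite expr0n eqn0Ngt Qf_gt0 subr0.
have := expf_card z; rewrite QfS exprS => H.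
have H1 : z * z ^+ Qf F = z * 1 by rewrite mulr1.
by rewrite (mulfI nz H1) subrr.
Qed.

Lemma sum3_le (a b c Q : nat) : (a + b + c <= Q)%N ->
  [/\ (a < Q.+1)%N, (b < Q.+1)%N & (c < Q.+1)%N].
Proof. move=> h; split; lia. Qed.

Lemma sum3_lemma (K a b c : nat) : (K < 3 * a)%N -> (K < 3 * b)%N ->
  (a + b + c <= K)%N -> (3 * c <= K)%N.
Proof. lia. Qed.

Lemma tricolored (F : finFieldType) (Ix D : finType) (S : {set Ix})
  (u v w : Ix -> D -> F) :
  (forall a, a \in S -> forall r, u a r + v a r = w a r) ->
  (forall a b c, a \in S -> b \in S -> c \in S ->
     (forall r, u a r + v b r = w c r) -> a = c /\ b = c) ->
  (#|S| <= 3 * #|@Mpred F D|)%N.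
Proof.
move=> Hdiag Hoff.
set Q := Qf F.
have [l [Hl He]] := poly_list1 F Q.
set s := size l.
pose m0 : F * nat * nat * nat := (0, 0%N, 0%N, 0%N).
pose nm (p : 'I_s) := nth m0 l p.
have degp (p : 'I_s) : (mdeg (nm p) <= Q)%N := allP Hl _ (mem_nth m0 (ltn_ord p)).
pose T a b c := \prod_(r : D) (1 - (u a r + v b r - w c r) ^+ Q).
pose al (ph : {ffun D -> 'I_s}) : {ffun D -> 'I_Q.+1} := [ffun r => inord (nm (ph r)).1.1.2].
pose be (ph : {ffun D -> 'I_s}) : {ffun D -> 'I_Q.+1} := [ffun r => inord (nm (ph r)).1.2].
pose ga (ph : {ffun D -> 'I_s}) : {ffun D -> 'I_Q.+1} := [ffun r => inord (nm (ph r)).2].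
pose cf (ph : {ffun D -> 'I_s}) := \prod_r (nm (ph r)).1.1.1.
pose X (al : {ffun D -> 'I_Q.+1}) a := \prod_r u a r ^+ al r.
pose Y (al : {ffun D -> 'I_Q.+1}) b := \prod_r v b r ^+ al r.
pose Z (al : {ffun D -> 'I_Q.+1}) c := \prod_r w c r ^+ al r.
have Texp a b c : T a b c =
    \sum_(ph : {ffun D -> 'I_s}) cf ph * X (al ph) a * Y (be ph) b * Z (ga ph) c.
  rewrite /T; under eq_bigr => r _ do rewrite He (big_nth m0) big_mkord.
  rewrite bigA_distr_bigA; apply: eq_bigr => ph _.
  rewrite /cf /X /Y /Z -!big_split /=; apply: eq_bigr => r _.
  have := degp (ph r); rewrite /mdeg /nm => /sum3_le [h1 h2 h3].
  by rewrite /al /be /ga !ffunE !inordK /mono /nm.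
have degsum ph : (\sum_r (al ph r : nat) + \sum_r (be ph r : nat) + \sum_r (ga ph r : nat)
     <= Q * #|D|)%N.
  rewrite -!big_split /= -sum1_card big_distrr /=; apply: leq_sum => r _.
  have := degp (ph r); rewrite /mdeg /nm => dg.
  have [h1 h2 h3] := sum3_le dg.
  by rewrite muln1 /al /be /ga !ffunE !inordK.
pose P := @Mpred F D.
pose g1 al0 b c := \sum_(ph | P (al ph) && (al ph == al0)) cf ph * Y (be ph) b * Z (ga ph) c.
pose g2 be0 a c := \sum_(ph | (~~ P (al ph) && P (be ph)) && (be ph == be0))
   cf ph * X (al ph) a * Z (ga ph) c.
pose g3 ga0 a b := \sum_(ph | (~~ P (al ph) && ~~ P (be ph)) && (ga ph == ga0))
   cf ph * X (al ph) a * Y (be ph) b.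
apply: (@slice_rank F Ix _ S P T X Y Z g1 g2 g3).
- move=> a aS; rewrite /T; apply/prodf_neq0 => r _.
  by rewrite fermat Hdiag // subrr eqxx oner_neq0.
- move=> a b c aS bS cS /prodf_neq0 H; apply: Hoff => // r.
  have := H r isT; rewrite fermat.
  case: (eqVneq (u a r + v b r - w c r) 0) => [/eqP|_].
    by rewrite subr_eq0 => /eqP.
  by rewrite eqxx.
- move=> a b c _ _ _; rewrite Texp (bigID (fun ph => P (al ph))) /=.
  rewrite [X in _ + X](bigID (fun ph => P (be ph))) /= addrA.
  congr (_ + _ + _).
  + rewrite (partition_big al P) //=; apply: eq_bigr => a0 _.
    rewrite mulr_sumr; apply: eq_bigr => ph /andP [_ /eqP <-]; ring.
  + rewrite (partition_big be P) /=; last by move=> ph /andP [].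
    apply: eq_bigr => a0 _.
    rewrite mulr_sumr; apply: eq_bigr => ph /andP [_ /eqP <-]; ring.
  + rewrite (partition_big ga P) /=.
      apply: eq_bigr => a0 _.
      rewrite mulr_sumr; apply: eq_bigr => ph /andP [_ /eqP <-]; ring.
    move=> ph /andP [nPa nPb]; move: nPa nPb (degsum ph).
    rewrite /P /Mpred /= -!ltnNge; exact: sum3_lemma.
Qed.

From mathcomp Require Import all_classical all_reals all_analysis.
From mathcomp Require Import lra.
Import Order.TTheory GRing.Theory Num.Theory.
Local Open Scope ring_scope.
Lemma natdiv3 (R : realFieldType) (a b c : nat) : (3 * a <= b * c)%N ->
  (a%:R : R) <= b%:R / 3 * c%:R.
Proof.
rewrite -(ler_nat R) !natrM => h.
have -> : (b%:R / 3 * c%:R : R) = (b%:R * c%:R) / 3 by rewrite mulrAC.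
by rewrite ler_pdivlMr // mulrC.
Qed.

Lemma count_bound_x (R : realType) (F : finFieldType) (D : finType) (x : R) :
  0 < x < 1 ->
  (#|@Mpred F D|%:R : R) <=
    ((\sum_(l < #|F|) x ^+ l) / powR x ((#|F|.-1)%:R / 3)) ^+ #|D|.
Proof.
move=> /andP [x0 x1].
have -> : (#|F|.-1 = Qf F) by [].
set Q := Qf F.
pose K : R := Q%:R / 3 * #|D|%:R.
have pK : powR x (Q%:R / 3) ^+ #|D| = powR x K.
  by rewrite /K [RHS]powRrM powR_mulrn ?powR_ge0.
have pK0 : 0 < powR x K by apply: powR_gt0.
rewrite expr_div_n pK ler_pdivlMr //.
have sumE : (\sum_(l < #|F|) x ^+ l) ^+ #|D| =
    \sum_(al : {ffun D -> 'I_Q.+1}) x ^+ (\sum_r (al r : nat)).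
  transitivity (\prod_(r : D) \sum_(l < Q.+1) x ^+ l).
    by rewrite prodr_const QfS.
  rewrite bigA_distr_bigA; apply: eq_bigr => al _; exact: prodrXr.
rewrite sumE -sum1_card natr_sum mulr_suml.
apply: le_trans (_ : \sum_(al | Mpred al) x ^+ (\sum_r (al r : nat)) <= _).
  apply: ler_sum => al Hal; rewrite mul1r -powR_mulrn ?(ltW x0) //.
  apply: ger_powR; first by rewrite x0 (ltW x1).
  by rewrite /K; apply: natdiv3.
rewrite [leRHS](bigID (fun al => Mpred al)) /= lerDl.
by apply: sumr_ge0 => al _; rewrite exprn_ge0 // ltW.
Qed.

Lemma Gamma_inf (R : realType) (F : finFieldType) :
  Gamma R #|F| = inf [set (\sum_(l < #|F|) x ^+ l) / powR x ((#|F|.-1)%:R / 3)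
                      | x in `]0, 1[]%classic.
Proof.
rewrite /Gamma /Jfun mulrA mulfV ?mul1r // pnatr_eq0 -lt0n.
exact: (ltn_trans _ (card_finNzRing_gt1 F)).
Qed.

Lemma count_bound (R : realType) (F : finFieldType) (D : finType) :
  (#|@Mpred F D|%:R : R) <= Gamma R #|F| ^+ #|D|.
Proof.
rewrite Gamma_inf.
set E := [set _ | x in _]%classic.
have hx : (2^-1 : R) \in `]0, 1[ by rewrite in_itv /= invr_gt0 ltr0n invf_lt1 ?ltr1n.
have E0 : (E !=set0)%classic.
  by exists ((\sum_(l < #|F|) 2^-1 ^+ l) / powR 2^-1 ((#|F|.-1)%:R / 3)); exists 2^-1.
have Eb : forall r, E r -> (#|@Mpred F D|%:R : R) <= r ^+ #|D| /\ 0 <= r.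
  move=> r [x xI <-]; move: xI; rewrite /= in_itv /= => xI; split.
    exact: count_bound_x.
  case/andP: xI => x0 _; apply: divr_ge0; last exact: powR_ge0.
  by apply: sumr_ge0 => l _; rewrite exprn_ge0 // ltW.
case: (posnP #|D|) => [D0|Dp].
  case: E0 => r Er; have [h _] := Eb r Er; by move: h; rewrite D0 !expr0.
set M := (#|@Mpred F D|%:R : R).
have M0 : 0 <= M by rewrite ler0n.
pose rt := powR M (#|D|%:R^-1).
have rtE : rt ^+ #|D| = M.
  rewrite /rt -powR_mulrn ?powR_ge0 // -powRrM mulVf ?powRr1 //.
  by rewrite pnatr_eq0 -lt0n.
have lb : lbound E rt.
  move=> r Er; have [h r0] := Eb r Er.
  have -> : r = powR (r ^+ #|D|) (#|D|%:R^-1).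
    rewrite -powR_mulrn // -powRrM mulfV ?powRr1 //.
    by rewrite pnatr_eq0 -lt0n.
  by apply: ge0_ler_powR => //; rewrite nnegrE exprn_ge0.
have rt_inf := lb_le_inf E0 lb.
rewrite -rtE; apply: lerXn2r => //; rewrite nnegrE ?powR_ge0 //.
exact: le_trans (powR_ge0 _ _) rt_inf.
Qed.

Lemma bernoulli (R : realFieldType) (d : R) (m : nat) : 0 <= d ->
  1 + m%:R * d <= (1 + d) ^+ m.
Proof.
move=> d0; elim: m => [|m IH]; first by rewrite mul0r addr0 expr0.
rewrite exprS mulrSr.
apply: le_trans (_ : (1 + d) * (1 + m%:R * d) <= _); last first.
  rewrite ler_pM2l //; apply: lt_le_trans (ltr01) _; by rewrite lerDl.
have : 0 <= m%:R * d * d by rewrite !mulr_ge0.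
move: (m%:R : R) => M h; lra.
Qed.

Lemma pow_bound (R : realType) (s g : R) : 0 < g -> 0 <= s ->
  (forall m, s ^+ m <= 3 * g ^+ m) -> s <= g.
Proof.
move=> g0 s0 H; rewrite leNgt; apply/negP => gs.
set y := s / g; set d := y - 1.
have d0 : 0 < d by rewrite /d subr_gt0 /y ltr_pdivlMr // mul1r.
pose m := Num.Def.archi_bound (2 / d).
have hm : 2 / d < m%:R by apply: archi_boundP; rewrite divr_ge0 // ltW.
have : y ^+ m <= 3.
  rewrite /y expr_div_n ler_pdivrMr ?exprn_gt0 //; exact: H.
apply/negP; rewrite -ltNge.
have B := bernoulli m (ltW d0).
have e1 : 1 + d = y by rewrite /d addrC subrK.
rewrite e1 in B; apply: lt_le_trans B.
have : 2 < m%:R * d by rewrite -ltr_pdivrMr.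
move: (m%:R * d) => md; lra.
Qed.


Lemma sol_swap (F : fieldType) m k n (A : 'M[F]_(m, k))
  (xa xb xc : 'I_k -> 'rV[F]_n) (j1 j2 : 'I_k) (c0 : F) :
  j1 != j2 -> col j1 A = c0 *: col j2 A -> is_solution A xc ->
  c0 *: xa j1 + xb j2 = c0 *: xc j1 + xc j2 ->
  is_solution A (fun j => if j == j1 then xa j1 else if j == j2 then xb j2 else xc j).
Proof.
move=> j12 Hcol Hc heq r.
pose y j := if j == j1 then xa j1 else if j == j2 then xb j2 else xc j.
change (\sum_(j < k) A r j *: y j = 0).
have e : \sum_(j < k) A r j *: y j =
    \sum_(j < k) A r j *: xc j + \sum_(j < k) A r j *: (y j - xc j).
  by rewrite -big_split /=; apply: eq_bigr => j _; rewrite scalerBr addrC subrK.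
rewrite e Hc add0r (bigD1 j1) // (bigD1 j2) /=; last by rewrite eq_sym.
rewrite big1 ?addr0; last first.
  by move=> j /andP [nj1 nj2]; rewrite /y (negbTE nj1) (negbTE nj2) subrr scaler0.
have j21 : (j2 == j1) = false by rewrite eq_sym (negbTE j12).
rewrite /y eqxx j21 eqxx.
have hA : A r j1 = c0 * A r j2.
  by have := congr1 (fun M : 'cV[F]_m => M r 0) Hcol; rewrite !mxE.
rewrite hA mulrC -scalerA -scalerDr scalerBr addrACA -opprD heq subrr scaler0.
by [].
Qed.

Lemma Gamma_ge1 (R : realType) (F : finFieldType) (D : finType) :
  1 <= Gamma R #|F| ^+ #|D|.
Proof.
apply: le_trans (count_bound R F D); rewrite ler1n; apply/card_gt0P.
exists [ffun => ord0]; rewrite /in_mem /= /Mpred big1 ?muln0 // => r _.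
by rewrite ffunE.
Qed.

Lemma tensor_bound (R : realType) (F : finFieldType) (Ix D : finType)
  (S : {set Ix}) (u v w : Ix -> D -> F) :
  (forall a, a \in S -> forall r, u a r + v a r = w a r) ->
  (forall a b c, a \in S -> b \in S -> c \in S ->
     (forall r, u a r + v b r = w c r) -> a = c /\ b = c) ->
  (#|S|%:R : R) <= Gamma R #|F| ^+ #|D|.
Proof.
move=> Hd Ho.
have g1 := Gamma_ge1 R F D.
apply: pow_bound; [exact: lt_le_trans ltr01 g1 | exact: ler0n |].
move=> m.
pose S' := [set ph : {ffun 'I_m -> Ix} | [forall k, ph k \in S]].
pose u' (ph : {ffun 'I_m -> Ix}) (kr : 'I_m * D) := u (ph kr.1) kr.2.
pose v' (ph : {ffun 'I_m -> Ix}) (kr : 'I_m * D) := v (ph kr.1) kr.2.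
pose w' (ph : {ffun 'I_m -> Ix}) (kr : 'I_m * D) := w (ph kr.1) kr.2.
have T := @tricolored F _ _ S' u' v' w'.
have cS' : #|S'| = (#|S| ^ m)%N.
  rewrite -[in RHS](card_ord m) -card_ffun_on; apply: eq_card => ph.
  by rewrite inE; apply/forallP/ffun_onP.
have Tb : (#|S'| <= 3 * #|@Mpred F ('I_m * D)%type|)%N.
  apply: T.
    move=> ph; rewrite inE => /forallP Hph [k r]; exact: Hd.
  move=> a b c; rewrite !inE => /forallP Ha /forallP Hb /forallP Hc H.
  have H2 k : a k = c k /\ b k = c k.
    by apply: Ho => // r; exact: (H (k, r)).
  by split; apply/ffunP => k; case: (H2 k).
have cb := count_bound R F ('I_m * D)%type.
rewrite card_prod card_ord mulnC exprM in cb.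
rewrite -natrX -cS'.
apply: le_trans (_ : (3 * #|@Mpred F ('I_m * D)%type|)%:R <= _).
  by rewrite ler_nat.
by rewrite natrM ler_wpM2l.
Qed.

Unset Implicit Arguments.

Theorem corollary6p2 (R : realType) (F : finFieldType) (m k n t L : nat)
  (A : 'M[F]_(m, k)) (x : 'I_L -> 'I_k -> 'rV[F]_n) (j1 j2 : 'I_k) :
  (0 < t)%N ->
  (forall i, is_solution A (x i)) ->
  (forall i i', i != i' -> disjoint_sol (x i) (x i')) ->
  j1 != j2 -> same_col_class A j1 j2 ->
  4 * t%:R * (Gamma R #|F|) ^+ n <= (L%:R : R) ->
  exists (i : 'I_L) (p : 'I_t -> 'I_L * 'I_L),
    injective p /\
    forall s : 'I_t,
      (p s).1 != i /\ (p s).2 != i /\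
      is_solution A (fun j => if j == j1 then x (p s).1 j1
                              else if j == j2 then x (p s).2 j2
                              else x i j).
Proof.
move=> t0 Hsol Hdisj j12 [c0 [c0n Hcol]] HL.
pose P (c : 'I_L) := [set p : 'I_L * 'I_L | [&& p.1 != c, p.2 != c &
   c0 *: x p.1 j1 + x p.2 j2 == c0 *: x c j1 + x c j2]].
case: (boolP [exists c, (t <= #|P c|)%N]) => [/existsP [c Pc] | /existsPn noc].
  exists c.
  pose p (s : 'I_t) : 'I_L * 'I_L := enum_val (Ordinal (leq_trans (ltn_ord s) Pc)).
  exists p; split.
    by move=> s1 s2 /enum_val_inj /(congr1 val) /= /val_inj.
  move=> s; have := enum_valP (Ordinal (leq_trans (ltn_ord s) Pc)).
  rewrite inE => /and3P [n1 n2 /eqP heq].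
  by split => //; split => //; apply: sol_swap j12 Hcol (Hsol c) heq.
exfalso.
pose Nn c := [set p.1 | p in P c].
have Nd c : (#|Nn c| <= t.-1)%N.
  apply: leq_trans (leq_imset_card _ _) _.
  by have := noc c; rewrite -ltnNge => h; rewrite -(prednK t0) ltnS in h.
have Nirr c : c \notin Nn c.
  apply/imsetP => [[p pP ec]]; move: pP; rewrite inE => /and3P [n1 _ _].
  by rewrite -ec eqxx in n1.
have [I [_ cI indI]] := indep_set_sub Nd Nirr [set: 'I_L].
rewrite cardsT card_ord in cI.
pose u a (r : 'I_n) := c0 * x a j1 0 r.
pose v a (r : 'I_n) := x a j2 0 r.
pose w a (r : 'I_n) := u a r + v a r.
have TB : (#|I|%:R : R) <= Gamma R #|F| ^+ #|'I_n|.
  apply: (@tensor_bound R F _ 'I_n I u v w) => // a b c aI bI cI' H.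
  have heq : c0 *: x a j1 + x b j2 = c0 *: x c j1 + x c j2.
    by apply/rowP => r; rewrite !mxE; exact: (H r).
  case: (eqVneq a c) => [eac | nac].
    rewrite eac in heq; split => //; apply/eqP; apply: contraT => nbc.
    by have := Hdisj b c nbc j2 j2; rewrite (addrI _ heq) eqxx.
  case: (eqVneq b c) => [ebc | nbc].
    rewrite ebc in heq.
    have e : c0 *: x a j1 = c0 *: x c j1 by apply: (addIr (x c j2)).
    by have := Hdisj a c nac j1 j1; rewrite (scalerI c0n e) eqxx.
  have aN : a \in Nn c.
    by apply/imsetP; exists (a, b) => //; rewrite inE /= nac nbc heq eqxx.
  by have := indI a c aI cI'; rewrite aN.
have g1 := Gamma_ge1 R F 'I_n.
rewrite card_ord in TB g1.
move: HL cI TB g1; set G := Gamma R #|F| ^+ n => HL cI TB g1.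
have cIR : (L%:R : R) <= (2 * t.-1 + 1)%:R * #|I|%:R by rewrite -natrM ler_nat.
have h2 : ((2 * t.-1 + 1)%:R : R) * #|I|%:R <= (2 * t.-1 + 1)%:R * G.
  by rewrite ler_wpM2l.
have ht : (t%:R : R) = t.-1%:R + 1 by rewrite -{1}(prednK t0) -natr1.
rewrite ht in HL; move: HL cIR h2; rewrite natrD natrM.
have hp : (0 : R) <= t.-1%:R * G by rewrite mulr_ge0 // (le_trans ler01 g1).
move: (t.-1%:R : R) hp => T hp; lra.
Qed.
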